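(* Let $G$ be the automorphism group of $(\mathbb{Q},<)$ and let $f \in G$. Then the following are equivalent: (i) there exist $g, g_1, g_2 \in G$ such that $g$ is a restriction of $f$, $g_1$ is a bump which is an orbital of $g$ (in the group-element sense defined in the context), $g = g_1 g_2$, and $g$ is conjugate in $G$ to $g_2$; (ii) $f$ has infinitely many non-trivial orbitals.
   Context: For $f \in G$, an orbital of $f$ is an equivalence class of $\mathbb{Q}$ under the relation $a \sim b$ iff there are integers $m,n$ with $f^m a \le b \le f^n a$; it is non-trivial if it has more than one point. The support of an element of $G$ is the set of points it moves. A bump is a non-identity element of $G$ with exactly one non-trivial orbital. An element $g$ is a restriction of $f$ if the support of $g$ is contained in that of $f$ and $g$ agrees with $f$ on the support of $g$. An element $g_1$ is an orbital of $g$ if $g_1$ is a bump whose support is contained in that of $g$ and $g_1$ agrees with $g$ on its support. Condition (i) is the meaning in $G$ of the first-order group-theoretic formula ${\bf inf}(x)$ used in the paper. *)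

(* Defs.v *)
From HB Require Import structures.
From mathcomp Require Import all_boot all_order all_algebra.
From mathcomp Require Import boolp classical_sets cardinality.
Set Implicit Arguments. Unset Strict Implicit. Unset Printing Implicit Defensive.
Import Order.TTheory GRing.Theory Num.Theory.
Local Open Scope ring_scope.
Local Open Scope classical_set_scope.

Record aut := Aut {
  fn :> rat -> rat;
  finv : rat -> rat;
  fnK : cancel fn finv;
  finvK : cancel finv fn;
  fn_mono : forall x y : rat, x < y -> fn x < fn y }.

Definition zpow (f : aut) (m : int) : rat -> rat :=
  match m with
  | Posz n => iter n (fn f)
  | Negz n => iter n.+1 (finv f)
  end.

Definition orb_rel (f : aut) (a b : rat) : Prop :=
  exists m n : int, zpow f m a <= b /\ b <= zpow f n a.

Definition orbital_of (f : aut) (a : rat) : set rat := [set b | orb_rel f a b].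

Definition nontriv_orbitals (f : aut) : set (set rat) :=
  [set A | (exists a, A = orbital_of f a) /\
           exists b c, A b /\ A c /\ b <> c].

Definition supp (f : aut) : set rat := [set x | f x <> x].

Definition is_bump (f : aut) : Prop :=
  (exists x, f x <> x) /\ exists A, nontriv_orbitals f = [set A].

Definition restriction (g f : aut) : Prop :=
  supp g `<=` supp f /\ forall x, supp g x -> g x = f x.

Definition orbital_elt (g1 g : aut) : Prop :=
  is_bump g1 /\ supp g1 `<=` supp g /\ forall x, supp g1 x -> g1 x = g x.

Definition is_prod (g g1 g2 : aut) : Prop := forall x, g x = g1 (g2 x).

Definition conjugate (g g2 : aut) : Prop :=
  exists h : aut, forall x, g (h x) = h (g2 x).

(* Main.v *)
From Pilot Require Import Defs.
From mathcomp Require Import all_boot all_order all_algebra.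
From mathcomp Require Import boolp classical_sets cardinality.
From mathcomp Require Import zify ring lra.
Unset Printing Implicit Defensive.
Import Order.TTheory GRing.Theory Num.Theory.
Local Open Scope ring_scope.
Local Open Scope classical_set_scope.
Notation finv := Pilot.Defs.finv.
Notation fnK := Pilot.Defs.fnK.
Notation finvK := Pilot.Defs.finvK.

Lemma finv_mono (f : aut) x y : x < y -> finv f x < finv f y.
Proof.
move=> lt; rewrite ltNge le_eqVlt; apply/negP => /orP[/eqP E|/(fn_mono f)].
  by move: lt; rewrite -(finvK f x) -(finvK f y) E ltxx.
by rewrite !finvK => /(lt_trans lt); rewrite ltxx.
Qed.

Lemma aut_le (f : aut) x y : x <= y -> f x <= f y.
Proof. by rewrite le_eqVlt => /orP[/eqP->//|/(fn_mono f)/ltW]. Qed.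
Lemma aut_ltE (f : aut) x y : (f x < f y) = (x < y).
Proof.
apply/idP/idP; last exact: fn_mono.
by move=> /(finv_mono f); rewrite !fnK.
Qed.
Lemma aut_inj (f : aut) : injective f.
Proof. exact: can_inj (fnK f). Qed.

Lemma zpowS f (j : int) x : zpow f (1 + j) x = f (zpow f j x).
Proof.
case: j => [n|n].
  by have -> : (1 + n%:Z = n.+1%:Z)%R by lia.
case: n => [|n]; first by rewrite /= finvK.
have -> : (1 + Negz n.+1 = Negz n)%R by rewrite !NegzE; lia.
by rewrite /= finvK.
Qed.

Lemma zpowP f (j : int) x : zpow f (-1 + j) x = finv f (zpow f j x).
Proof.
case: j => [n|n]; last first.
  have -> : (-1 + Negz n = Negz n.+1)%R by rewrite !NegzE; lia.
  by [].
case: n => [|n]; first by [].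
have -> : (-1 + n.+1%:Z = n%:Z)%R by lia.
by rewrite /= fnK.
Qed.

Lemma zpowD f (i j : int) x : zpow f (i + j) x = zpow f i (zpow f j x).
Proof.
case: i => n.
  elim: n => [|n IH]; first by rewrite add0r.
  have -> : (n.+1%:Z + j = 1 + (n%:Z + j))%R by lia.
  by rewrite zpowS IH.
elim: n => [|n IH].
  have -> : (Negz 0 + j = -1 + j)%R by rewrite NegzE; lia.
  by rewrite zpowP.
have -> : (Negz n.+1 + j = -1 + (Negz n + j))%R by rewrite !NegzE; lia.
by rewrite zpowP IH.
Qed.

Lemma zpow0 f x : zpow f 0 x = x. Proof. by []. Qed.
Lemma zpow1 f x : zpow f 1 x = f x. Proof. by []. Qed.

Lemma zpowK f (k : int) x : zpow f (- k) (zpow f k x) = x.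
Proof. by rewrite -zpowD addNr. Qed.
Lemma zpowKV f (k : int) x : zpow f k (zpow f (- k) x) = x.
Proof. by rewrite -zpowD addrN. Qed.

Lemma zpow_mono f (k : int) x y : x < y -> zpow f k x < zpow f k y.
Proof.
move=> lt; case: k => n /=.
  by elim: n => [|n IH] //=; apply: fn_mono.
by elim: n => [|n IH] /=; apply: finv_mono.
Qed.
Lemma zpow_le f (k : int) x y : x <= y -> zpow f k x <= zpow f k y.
Proof. by rewrite le_eqVlt => /orP[/eqP->//|/(zpow_mono f k)/ltW]. Qed.
Lemma zpow_ltE f (k : int) x y : (zpow f k x < zpow f k y) = (x < y).
Proof.
apply/idP/idP; last exact: zpow_mono.
by move=> /(zpow_mono f (-k)); rewrite !zpowK.
Qed.
Lemma zpow_leE f (k : int) x y : (zpow f k x <= zpow f k y) = (x <= y).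
Proof. by rewrite !leNgt zpow_ltE. Qed.


Set Implicit Arguments. Unset Strict Implicit.

Lemma orb_refl f a : orb_rel f a a.
Proof. by exists 0, 0. Qed.

Lemma orb_sym f a b : orb_rel f a b -> orb_rel f b a.
Proof.
move=> [m [n [h1 h2]]]; exists (- n), (- m); split.
  by rewrite -(zpowK f n a) zpow_leE.
by rewrite -(zpowK f m a) zpow_leE.
Qed.

Lemma orb_trans f a b c : orb_rel f a b -> orb_rel f b c -> orb_rel f a c.
Proof.
move=> [m [n [h1 h2]]] [m' [n' [h3 h4]]]; exists (m' + m), (n' + n); split.
  by rewrite zpowD; apply: le_trans h3; rewrite zpow_leE.
by rewrite zpowD; apply: (le_trans h4); rewrite zpow_leE.
Qed.

Lemma orbital_eq f a b : orb_rel f a b -> orbital_of f a = orbital_of f b.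
Proof.
move=> ab; rewrite /orbital_of; apply/seteqP; split => x /=.
  by move=> ax; apply: orb_trans (orb_sym ab) ax.
by move=> bx; apply: orb_trans ab bx.
Qed.

Lemma orb_zpow f a k : orb_rel f a (zpow f k a).
Proof. by exists k, k. Qed.

Lemma orb_f (f : aut) a : orb_rel f a (f a).
Proof. exact: (orb_zpow f a 1). Qed.

Lemma orb_finv f a : orb_rel f a (finv f a).
Proof. exact: (orb_zpow f a (-1)). Qed.

Lemma zpow_fix (f : aut) a k : f a = a -> zpow f k a = a.
Proof.
move=> fa; have fia : finv f a = a by rewrite -{1}fa fnK.
by case: k => n /=; elim: n => [|n IH] //=; rewrite IH.
Qed.

Lemma orb_fix (f : aut) a b : f a = a -> orb_rel f a b -> b = a.
Proof.
move=> fa [m [n]]; rewrite !zpow_fix // => -[h1 h2].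
by apply/eqP; rewrite eq_le h2 h1.
Qed.

Lemma orb_convex f a x y z : orb_rel f a x -> orb_rel f a y -> x <= z -> z <= y ->
  orb_rel f a z.
Proof.
move=> [m [n [h1 h2]]] [m' [n' [h3 h4]]] xz zy; exists m, n'; split.
  exact: le_trans h1 xz.
exact: le_trans zy h4.
Qed.

Lemma zpow_agree (f1 f2 : aut) (X : set rat) :
  (forall x, X x -> f1 x = f2 x) -> (forall x, X x -> X (f1 x)) ->
  (forall x, X x -> X (finv f1 x)) ->
  forall k x, X x -> X (zpow f1 k x) /\ zpow f1 k x = zpow f2 k x.
Proof.
move=> ag cf ci.
have ai : forall x, X x -> finv f1 x = finv f2 x.
  move=> x Xx; apply: (aut_inj f2); rewrite finvK -ag ?finvK //; exact: ci.
move=> k x Xx; case: k => n /=.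
  elim: n => [|n [IH1 IH2]] //=; split; first exact: cf.
  by rewrite ag // IH2.
elim: n => [|n [IH1 IH2]] /=; first by split; [exact: ci | exact: ai].
by split; [exact: ci | rewrite ai // IH2].
Qed.

Lemma orb_agree (f1 f2 : aut) (X : set rat) :
  (forall x, X x -> f1 x = f2 x) -> (forall x, X x -> X (f1 x)) ->
  (forall x, X x -> X (finv f1 x)) ->
  forall x y, X x -> orb_rel f1 x y <-> orb_rel f2 x y.
Proof.
move=> ag cf ci x y Xx.
have E k : zpow f1 k x = zpow f2 k x by case: (zpow_agree ag cf ci k Xx).
by split => -[m [n]]; exists m, n; rewrite ?E // -?E.
Qed.

Lemma zpow_conj (g g2 h : aut) : (forall x, g (h x) = h (g2 x)) ->
  forall k x, zpow g k (h x) = h (zpow g2 k x).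
Proof.
move=> gh.
have gih : forall x, finv g (h x) = h (finv g2 x).
  by move=> x; apply: (aut_inj g); rewrite finvK gh finvK.
move=> k x; case: k => n /=.
  by elim: n => [|n IH] //=; rewrite IH gh.
by elim: n => [|n IH] /=; rewrite ?IH gih.
Qed.

Lemma orb_conj (g g2 h : aut) : (forall x, g (h x) = h (g2 x)) ->
  forall x y, orb_rel g2 x y -> orb_rel g (h x) (h y).
Proof.
move=> gh x y [m [n [h1 h2]]]; exists m, n; rewrite !(zpow_conj gh).
by split; apply: aut_le.
Qed.


Definition piso (C D : set rat) (p q : rat -> rat) : Prop :=
  [/\ forall x, C x -> D (p x), forall y, D y -> C (q y),
      forall x, C x -> q (p x) = x, forall y, D y -> p (q y) = y &
      forall x y, C x -> C y -> x < y -> p x < p y].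

Definition iso (C D : set rat) := exists p q, piso C D p q.

Lemma piso_ext C D C' D' p q : (forall x, C x <-> C' x) -> (forall x, D x <-> D' x) ->
  piso C D p q -> piso C' D' p q.
Proof.
move=> EC ED [h1 h2 h3 h4 h5]; split.
- by move=> x /EC /h1 /ED.
- by move=> x /ED /h2 /EC.
- by move=> x /EC /h3.
- by move=> x /ED /h4.
- by move=> x y /EC Cx /EC Cy; apply: h5.
Qed.

Lemma piso_mono' C D p q : piso C D p q -> forall x y, C x -> C y -> x <= y -> p x <= p y.
Proof.
move=> [_ _ _ _ h5] x y Cx Cy; rewrite le_eqVlt => /orP[/eqP->//|/(h5 _ _ Cx Cy)/ltW//].
Qed.

Lemma piso_ltE C D p q : piso C D p q -> forall x y, C x -> C y -> (p x < p y) = (x < y).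
Proof.
move=> P x y Cx Cy; apply/idP/idP; last by case: P => _ _ _ _; apply.
by apply: contraLR; rewrite -!leNgt; apply: piso_mono' P _ _ Cy Cx.
Qed.

Lemma piso_inv C D p q : piso C D p q -> piso D C q p.
Proof.
move=> P; case: (P) => h1 h2 h3 h4 h5; split => //.
move=> x y Dx Dy lt; rewrite -(piso_ltE P) ?h4 //; exact: h2.
Qed.

Lemma piso_comp C D E p q p' q' : piso C D p q -> piso D E p' q' ->
  piso C E (fun x => p' (p x)) (fun y => q (q' y)).
Proof.
move=> [h1 h2 h3 h4 h5] [k1 k2 k3 k4 k5]; split.
- by move=> x /h1 /k1.
- by move=> x /k2 /h2.
- by move=> x Cx; rewrite k3 ?h3 //; apply: h1.
- by move=> x Ex; rewrite h4 ?k4 //; apply: k2.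
- by move=> x y Cx Cy lt; apply: k5; [exact: h1| exact: h1| exact: h5].
Qed.

Lemma glue (I : Type) (P Q : I -> set rat) (p q : I -> rat -> rat) (C D : set rat) :
 (forall i, piso (P i) (Q i) (p i) (q i)) ->
 (forall i j x, P i x -> P j x -> i = j) -> (forall i j y, Q i y -> Q j y -> i = j) ->
 (forall i j x y, i <> j -> P i x -> P j y -> x < y -> p i x < p j y) ->
 (forall x, C x <-> exists i, P i x) -> (forall y, D y <-> exists i, Q i y) ->
 exists p' q', piso C D p' q' /\ (forall i x, P i x -> p' x = p i x) /\
               (forall i y, Q i y -> q' y = q i y).
Proof.
move=> Pi dP dQ cp EC ED.
pose p' x := match pselect (exists i, P i x) with
             | left h => p (projT1 (cid h)) x | right _ => x end.
pose q' y := match pselect (exists i, Q i y) with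
             | left h => q (projT1 (cid h)) y | right _ => y end.
have p'E i x : P i x -> p' x = p i x.
  move=> Pix; rewrite /p'; case: pselect => [h|[]]; last by exists i.
  by case: (cid h) => j /= Pjx; rewrite (dP _ _ _ Pjx Pix).
have q'E i y : Q i y -> q' y = q i y.
  move=> Qiy; rewrite /q'; case: pselect => [h|[]]; last by exists i.
  by case: (cid h) => j /= Qjy; rewrite (dQ _ _ _ Qjy Qiy).
exists p', q'; split; last by split.
split.
- move=> x /EC [i Pix]; rewrite (p'E _ _ Pix); apply/ED; exists i.
  by case: (Pi i) => + _ _ _ _; apply.
- move=> y /ED [i Qiy]; rewrite (q'E _ _ Qiy); apply/EC; exists i.
  by case: (Pi i) => _ + _ _ _; apply.
- move=> x /EC [i Pix]; rewrite (p'E _ _ Pix); case: (Pi i) => h1 _ h3 _ _.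
  by rewrite (q'E i) ?h3 //; apply: h1.
- move=> y /ED [i Qiy]; rewrite (q'E _ _ Qiy); case: (Pi i) => _ h2 _ h4 _.
  by rewrite (p'E i) ?h4 //; apply: h2.
- move=> x y /EC [i Pix] /EC [j Pjy] lt; rewrite (p'E _ _ Pix) (p'E _ _ Pjy).
  have [E|ij] := pselect (i = j); last exact: cp.
  subst j.
  by case: (Pi i) => _ _ _ _ h5; apply: h5.
Qed.

Definition aut_of_piso p q (P : piso setT setT p q) : aut.
Proof.
refine (@Aut p q _ _ _).
- by move=> x; case: P => _ _ h3 _ _; apply: h3.
- by move=> x; case: P => _ _ _ h4 _; apply: h4.
- by move=> x y; case: P => _ _ _ _ h5; apply: h5.
Defined.

Lemma aut_of_pisoE p q (P : piso setT setT p q) x : aut_of_piso P x = p x.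
Proof. by []. Qed.

Definition ico (u v : rat) : set rat := [set x | u <= x /\ x < v].

Lemma piso_zpow (f : aut) (k : int) u v u' v' :
  zpow f k u = u' -> zpow f k v = v' ->
  piso (ico u v) (ico u' v') (zpow f k) (zpow f (- k)).
Proof.
move=> <- <-; split.
- by move=> x [h1 h2]; split; rewrite ?zpow_leE ?zpow_ltE.
- move=> y [h1 h2]; split.
    by rewrite -(zpowK f k u) zpow_leE.
  by rewrite -(zpowK f k v) zpow_ltE.
- by move=> x _; rewrite zpowK.
- by move=> x _; rewrite zpowKV.
- by move=> x y _ _; rewrite zpow_ltE.
Qed.

Definition aff (u v u' v' : rat) (x : rat) : rat := u' + (x - u) * ((v' - u') / (v - u)).

Lemma piso_aff u v u' v' : u < v -> u' < v' ->
  piso (ico u v) (ico u' v') (aff u v u' v') (aff u' v' u v).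
Proof.
move=> uv uv'; rewrite /aff.
have r0 : 0 < (v' - u') / (v - u) by apply: divr_gt0; rewrite subr_gt0.
have r0' : 0 < (v - u) / (v' - u') by apply: divr_gt0; rewrite subr_gt0.
have n0 : v - u != 0 by rewrite subr_eq0 gt_eqF.
have n0' : v' - u' != 0 by rewrite subr_eq0 gt_eqF.
have key : forall a b c d : rat, a < b -> 0 < (d - c) / (b - a) ->
    (b - a) * ((d - c) / (b - a)) = d - c.
  move=> a b c d ab _; rewrite mulrC -mulrA mulVf ?mulr1 //.
  by rewrite subr_eq0 gt_eqF.
split.
- move=> x [h1 h2]; split.
    by rewrite lerDl; apply: mulr_ge0; [rewrite subr_ge0| exact: ltW].
  rewrite -ltrBrDl -[X in _ < X](key u v u' v') //.
  by rewrite ltr_pM2r // ltrD2r.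
- move=> x [h1 h2]; split.
    by rewrite lerDl; apply: mulr_ge0; [rewrite subr_ge0| exact: ltW].
  rewrite -ltrBrDl -[X in _ < X](key u' v' u v) //.
  by rewrite ltr_pM2r // ltrD2r.
- by move=> x _; field; rewrite n0 n0'.
- by move=> x _; field; rewrite n0 n0'.
- by move=> x y _ _ lt; rewrite ltrD2l ltr_pM2r // ltrD2r.
Qed.


Definition incr (s : int -> rat) := forall k, s k < s (k + 1).

Lemma incr_lt s : incr s -> forall i j, i < j -> s i < s j.
Proof.
move=> si i j ij.
have [n ->] : exists n : nat, j = i + n.+1%:Z by exists (absz (j - i)).-1; lia.
elim: n => [|n IH]; first exact: si.
apply: lt_trans IH _; have -> : i + n.+2%:Z = (i + n.+1%:Z) + 1 by lia.
exact: si.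
Qed.

Lemma incr_le s : incr s -> forall i j, i <= j -> s i <= s j.
Proof.
move=> si i j; rewrite le_eqVlt => /orP[/eqP->//|/(incr_lt si)/ltW//].
Qed.

Lemma incr_floor s x j k : incr s -> s j <= x -> x < s k ->
  exists i, s i <= x /\ x < s (i + 1).
Proof.
move=> si jx xk.
have jk : j < k.
  by rewrite ltNge; apply/negP => /(incr_le si) kj; move: (le_lt_trans jx xk); rewrite ltNge kj.
have [n En] : exists n : nat, k = j + n%:Z by exists (absz (k - j)); lia.
rewrite En in xk; clear En jk.
elim: n xk => [|n IH] xk; first by move: (le_lt_trans jx xk); rewrite addr0 ltxx.
have [lt|ge] := ltP x (s (j + n%:Z)); first exact: IH.
exists (j + n%:Z); split => //.
by have <- : j + n.+1%:Z = (j + n%:Z) + 1 by lia.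
Qed.

Lemma int_glue (s t : int -> rat) (p q : int -> rat -> rat) (C D : set rat) :
  incr s -> incr t ->
  (forall k, piso (ico (s k) (s (k + 1))) (ico (t k) (t (k + 1))) (p k) (q k)) ->
  (forall x, C x <-> exists k, ico (s k) (s (k + 1)) x) ->
  (forall y, D y <-> exists k, ico (t k) (t (k + 1)) y) ->
  exists p' q', piso C D p' q' /\
     (forall k x, ico (s k) (s (k + 1)) x -> p' x = p k x).
Proof.
move=> si ti Pk EC ED.
have disj u : incr u -> forall i j x, ico (u i) (u (i + 1)) x -> ico (u j) (u (j + 1)) x -> i = j.
  move=> ui i j x [h1 h2] [h3 h4]; apply/eqP; rewrite eq_le; apply/andP; split.
    rewrite leNgt; apply/negP => lt.
    have le : u (j + 1) <= u i by apply: incr_le => //; lia.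
    by move: (le_lt_trans le (le_lt_trans h1 h4)); rewrite ltxx.
  rewrite leNgt; apply/negP => lt.
  have le : u (i + 1) <= u j by apply: incr_le => //; lia.
  by move: (le_lt_trans le (le_lt_trans h3 h2)); rewrite ltxx.
suff cp : forall i j x y, i <> j -> ico (s i) (s (i + 1)) x ->
    ico (s j) (s (j + 1)) y -> x < y -> p i x < p j y.
  have [p' [q' [P [E1 E2]]]] := glue Pk (disj s si) (disj t ti) cp EC ED.
  by exists p', q'.
move=> i j x y ij [h1 h2] [h3 h4] xy.
have lij : i < j.
  rewrite ltNge le_eqVlt; apply/negP => /orP[/eqP E|lt]; first by apply: ij.
  have : s (j + 1) <= s i by apply: incr_le => //; lia.
  move=> le; have := lt_le_trans (lt_le_trans (lt_trans xy h4) le) h1.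
  by rewrite ltxx.
case: (Pk i) => [+ _ _ _ _] => /(_ x (conj h1 h2)) [_ a1].
case: (Pk j) => [+ _ _ _ _] => /(_ y (conj h3 h4)) [a2 _].
apply: (lt_le_trans a1); apply: le_trans a2; apply: incr_le => //; lia.
Qed.


Lemma zpow_incr (f : aut) a : a < f a -> incr (fun k => zpow f k a).
Proof. by move=> af k /=; rewrite zpowD zpow1 zpow_ltE. Qed.

Lemma zpowS' (f : aut) k x : zpow f (k + 1) x = f (zpow f k x).
Proof. by rewrite addrC zpowS. Qed.

Lemma orbital_cover (f : aut) a : a < f a -> forall x,
  orbital_of f a x <-> exists k, ico (zpow f k a) (zpow f (k + 1) a) x.
Proof.
move=> af x; split.
  move=> [m [n [h1 h2]]]; apply: (incr_floor (zpow_incr af) h1).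
  apply: le_lt_trans h2 _; exact: (zpow_incr af).
move=> [k [h1 h2]]; exists k, (k + 1); split => //; exact: ltW.
Qed.

Lemma bump_conj_up (f1 f2 : aut) a b : a < f1 a -> b < f2 b ->
  exists p q, piso (orbital_of f1 a) (orbital_of f2 b) p q /\
    forall x, orbital_of f1 a x -> p (f1 x) = f2 (p x).
Proof.
move=> af bf.
pose p k x := zpow f2 k (aff a (f1 a) b (f2 b) (zpow f1 (- k) x)).
pose q k y := zpow f1 (- - k) (aff b (f2 b) a (f1 a) (zpow f2 (- k) y)).
have Pk : forall k, piso (ico (zpow f1 k a) (zpow f1 (k + 1) a))
                      (ico (zpow f2 k b) (zpow f2 (k + 1) b)) (p k) (q k).
  move=> k.
  have E1 : zpow f1 (- k) (zpow f1 k a) = a by exact: zpowK.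
  have E2 : zpow f1 (- k) (zpow f1 (k + 1) a) = f1 a.
    by rewrite -zpowD; have -> : - k + (k + 1) = 1 by lia.
  have E3 : zpow f2 k b = zpow f2 k b by [].
  have E4 : zpow f2 k (f2 b) = zpow f2 (k + 1) b by rewrite (zpowD f2 k 1 b).
  exact: (piso_comp (piso_comp (piso_zpow E1 E2) (piso_aff af bf)) (piso_zpow E3 E4)).
have [p' [q' [P E]]] := int_glue (zpow_incr af) (zpow_incr bf) Pk
   (orbital_cover af) (orbital_cover bf).
exists p', q'; split => // x /(orbital_cover af) [k [h1 h2]].
have h : ico (zpow f1 (k + 1) a) (zpow f1 (k + 1 + 1) a) (f1 x).
  split; first by rewrite zpowS'; exact: aut_le.
  by rewrite (zpowS' f1 (k + 1)) aut_ltE.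
rewrite (E _ _ h) (E _ _ (conj h1 h2)) /p zpowS'; congr (f2 (zpow f2 k (aff _ _ _ _ _))).
rewrite -zpow1 -zpowD; congr (zpow f1 _ x); lia.
Qed.

Definition invaut (f : aut) : aut :=
  @Aut (finv f) f (finvK f) (fnK f) (@finv_mono f).

Lemma zpow_inv (f : aut) k x : zpow (invaut f) k x = zpow f (- k) x.
Proof.
case: k => [[|n]|n] //.
Qed.

Lemma orbital_inv (f : aut) a : orbital_of (invaut f) a = orbital_of f a.
Proof.
apply/seteqP; split => x [m [n]]; rewrite ?zpow_inv => -[h1 h2].
  by exists (- m), (- n).
by exists (- m), (- n); rewrite !zpow_inv !opprK.
Qed.

Lemma orb_closed_f (f : aut) a x : orbital_of f a x -> orbital_of f a (f x).
Proof. move=> h; exact: orb_trans h (orb_f _ _). Qed.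
Lemma orb_closed_finv (f : aut) a x : orbital_of f a x -> orbital_of f a (finv f x).
Proof. move=> h; exact: orb_trans h (orb_finv _ _). Qed.

Lemma bump_conj (f1 f2 : aut) a b : (a < f1 a) = (b < f2 b) ->
  f1 a <> a -> f2 b <> b ->
  exists p q, piso (orbital_of f1 a) (orbital_of f2 b) p q /\
    forall x, orbital_of f1 a x -> p (f1 x) = f2 (p x).
Proof.
move=> E fa fb.
have [af|fa'] := ltP a (f1 a).
  by apply: bump_conj_up; rewrite // -E.
have af : f1 a < a by rewrite lt_neqAle fa' andbT; apply/eqP.
have bf : f2 b < b.
  rewrite lt_neqAle; apply/andP; split; first by apply/eqP.
  by rewrite leNgt -E -leNgt.
have a1 : a < invaut f1 a by have := @finv_mono f1 _ _ af; rewrite fnK.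
have b1 : b < invaut f2 b by have := @finv_mono f2 _ _ bf; rewrite fnK.
have [p [q [P C]]] := @bump_conj_up (invaut f1) (invaut f2) a b a1 b1.
rewrite !orbital_inv in P C.
exists p, q; split => // x Ox.
have := C (f1 x) (orb_closed_f Ox); rewrite /= fnK => ->.
case: P => h1 _ _ _ _; rewrite finvK //.
Qed.


Definition convex (C : set rat) := forall x y z, C x -> C y -> x <= z -> z <= y -> C z.
Definition nomax (C : set rat) := forall x, C x -> exists y, C y /\ x < y.
Definition nomin (C : set rat) := forall x, C x -> exists y, C y /\ y < x.

Definition enum_rat (n : nat) : rat := odflt 0 (unpickle n).
Lemma enum_ratP (x : rat) : enum_rat (pickle x) = x.
Proof. by rewrite /enum_rat pickleK. Qed.

Lemma cofinal_seq (C : set rat) c0 : C c0 -> nomax C ->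
  exists u : nat -> rat, u 0%N = c0 /\ (forall n, C (u n)) /\
    (forall n, u n < u n.+1) /\ (forall x, C x -> exists n, x < u n).
Proof.
move=> Cc0 nm.
have Hex : forall x, exists y, C x -> C y /\ x < y.
  move=> x; case: (pselect (C x)) => [h|h]; last by exists x.
  by case: (nm x h) => y hy; exists y.
have [up Hup] := choice Hex.
pose nx n w := if `[< C (enum_rat n) >] then Num.max w (enum_rat n) else w.
have Cnx n w : C w -> C (nx n w).
  move=> Cw; rewrite /nx; case: asboolP => // Ce.
  by rewrite /Num.max; case: ifP.
have nxge n w : w <= nx n w.
  by rewrite /nx; case: asboolP => // _; rewrite le_max lexx.
pose u := fix u n := if n is n'.+1 then up (nx n' (u n')) else c0.
have Cu n : C (u n) by elim: n => [|n IH] //=; case: (Hup (nx n (u n))) => //; exact: Cnx.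
exists u; split => //; split => //; split.
  move=> n /=; apply: le_lt_trans (nxge n (u n)) _.
  by case: (Hup (nx n (u n))) => //; exact: Cnx.
move=> x Cx; exists (pickle x).+1 => /=.
have : x <= nx (pickle x) (u (pickle x)).
  rewrite /nx enum_ratP; case: asboolP => // _; rewrite le_max lexx orbT //.
move=> /le_lt_trans; apply; case: (Hup (nx (pickle x) (u (pickle x)))) => //; exact: Cnx.
Qed.

Lemma coinitial_seq (C : set rat) c0 : C c0 -> nomin C ->
  exists v : nat -> rat, v 0%N = c0 /\ (forall n, C (v n)) /\
    (forall n, v n.+1 < v n) /\ (forall x, C x -> exists n, v n < x).
Proof.
move=> Cc0 nm.
have [u [u0 [Cu [uinc ucof]]]] : exists u : nat -> rat, u 0%N = - c0 /\
   (forall n, C (- u n)) /\ (forall n, u n < u n.+1) /\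
   (forall x, C (- x) -> exists n, x < u n).
  apply: (@cofinal_seq [set x | C (- x)]); first by rewrite /= opprK.
  move=> x /= /nm [y [Cy yx]]; exists (- y); rewrite /= opprK; split => //.
  by rewrite ltrNr.
exists (fun n => - u n); split; first by rewrite u0 opprK.
split => //; split; first by move=> n; rewrite ltrN2.
move=> x Cx; have [n h] : exists n, - x < u n by apply: ucof; rewrite opprK.
by exists n; rewrite ltrNl.
Qed.

Definition sc (u v : nat -> rat) (k : int) : rat :=
  match k with Posz n => u n | Negz n => v n.+1 end.

Lemma scaffold (C : set rat) : convex C -> (exists c, C c) -> nomax C -> nomin C ->
  exists s : int -> rat, incr s /\ forall x, C x <-> exists k, ico (s k) (s (k + 1)) x.
Proof.
move=> cC [c0 Cc0] nM nm.
have [u [u0 [Cu [uinc ucof]]]] := cofinal_seq Cc0 nM.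
have [v [v0 [Cv [vdec vcof]]]] := coinitial_seq Cc0 nm.
have si : incr (sc u v).
  case=> n.
    have -> : Posz n + 1 = Posz n.+1 by lia.
    exact: uinc.
  case: n => [|n].
    have -> : Negz 0 + 1 = 0 by [].
    rewrite /= u0 -v0; exact: vdec.
  have -> : Negz n.+1 + 1 = Negz n by rewrite !NegzE; lia.
  exact: vdec.
have Cs k : C (sc u v k) by case: k => n; [exact: Cu|exact: Cv].
exists (sc u v); split => // x; split.
  move=> Cx; have [n1 h1] := ucof x Cx; have [n2 h2] := vcof x Cx.
  case: n2 h2 => [|n2] h2.
    apply: (@incr_floor _ x 0 (Posz n1) si) => //.
    by rewrite /= u0 -v0; apply: ltW.
  by apply: (@incr_floor _ x (Negz n2) (Posz n1) si) => //; apply: ltW.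
move=> [k [h1 h2]]; apply: (cC _ _ _ (Cs k) (Cs (k + 1)) h1); exact: ltW.
Qed.

Lemma core_iso (C D : set rat) : convex C -> (exists c, C c) -> nomax C -> nomin C ->
  convex D -> (exists d, D d) -> nomax D -> nomin D -> iso C D.
Proof.
move=> cC nC MC mC cD nD MD mD.
have [s [si Es]] := scaffold cC nC MC mC.
have [t [ti Et]] := scaffold cD nD MD mD.
have Pk k : piso (ico (s k) (s (k + 1))) (ico (t k) (t (k + 1)))
   (aff (s k) (s (k + 1)) (t k) (t (k + 1))) (aff (t k) (t (k + 1)) (s k) (s (k + 1))).
  exact: piso_aff.
have [p [q [P _]]] := int_glue si ti Pk Es Et.
by exists p, q.
Qed.


Definition ismin (C : set rat) x := C x /\ forall y, C y -> x <= y.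
Definition ismax (C : set rat) x := C x /\ forall y, C y -> y <= x.
Definition hasmin (C : set rat) := exists x, ismin C x.
Definition hasmax (C : set rat) := exists x, ismax C x.
Definition interior (C : set rat) := [set x | exists y z, C y /\ C z /\ y < x /\ x < z].

Lemma iso_ext C D C' D' : (forall x, C x <-> C' x) -> (forall x, D x <-> D' x) ->
  iso C D -> iso C' D'.
Proof. by move=> EC ED [p [q P]]; exists p, q; apply: piso_ext P. Qed.

Lemma mid_lt (x z : rat) : x < z -> x < (x + z) / 2 /\ (x + z) / 2 < z.
Proof. by move=> xz; split; lra. Qed.

Lemma interior_props C : convex C -> (exists x y, C x /\ C y /\ x < y) ->
  [/\ convex (interior C), exists c, interior C c, nomax (interior C) &
      nomin (interior C)].
Proof.
move=> cC [x [y [Cx [Cy xy]]]]; split.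
- move=> a b c [y1 [z1 [h1 [h2 [h3 h4]]]]] [y2 [z2 [k1 [k2 [k3 k4]]]]] ac cb.
  by exists y1, z2; do !split => //; [exact: lt_le_trans ac| exact: le_lt_trans cb k4].
- by exists ((x + y) / 2), x, y; have [] := mid_lt xy.
- move=> a [y1 [z1 [h1 [h2 [h3 h4]]]]]; have [m1 m2] := mid_lt h4.
  exists ((a + z1) / 2); split => //; exists a, z1; do !split => //.
  exact: cC h1 h2 (ltW h3) (ltW h4).
- move=> a [y1 [z1 [h1 [h2 [h3 h4]]]]]; have [m1 m2] := mid_lt h3.
  exists ((y1 + a) / 2); split => //; exists y1, a; do !split => //.
  exact: cC h1 h2 (ltW h3) (ltW h4).
Qed.

Lemma add_lo X Y p q m m' : piso X Y p q -> (forall x, X x -> m < x) ->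
  (forall y, Y y -> m' < y) -> iso [set x | X x \/ x = m] [set y | Y y \/ y = m'].
Proof.
move=> P mX mY.
pose PP (b : bool) := if b then X else [set m].
pose QQ (b : bool) := if b then Y else [set m'].
pose pp (b : bool) := if b then p else fun _ => m'.
pose qq (b : bool) := if b then q else fun _ => m.
have Pi b : piso (PP b) (QQ b) (pp b) (qq b).
  case: b => //; split; rewrite /PP /QQ /pp /qq /set1 //=.
  by move=> x y -> ->; rewrite ltxx.
have [|||||p' [q' [P' _]]] := @glue bool PP QQ pp qq [set x | X x \/ x = m]
  [set y | Y y \/ y = m'] Pi.
- rewrite /PP /set1; case; case => //= x; first by move=> + E; rewrite E => /mX; rewrite ltxx.
  by move=> E; rewrite E => /mX; rewrite ltxx.
- rewrite /QQ /set1; case; case => //= x; first by move=> + E; rewrite E => /mY; rewrite ltxx.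
  by move=> E; rewrite E => /mY; rewrite ltxx.
- rewrite /PP /pp /set1; case; case => //= x y _.
    by move=> Xx E; rewrite E => /(lt_trans (mX _ Xx)); rewrite ltxx.
  by move=> E Xy _; apply: mY; case: P => + _ _ _ _; apply.
- rewrite /PP /set1 => x /=; split => [[Xx|E]|[[]//=]]; [by exists true|by exists false|by left|by right].
- rewrite /QQ /set1 => x /=; split => [[Xx|E]|[[]//=]]; [by exists true|by exists false|by left|by right].
by exists p', q'.
Qed.

Lemma add_hi X Y p q m m' : piso X Y p q -> (forall x, X x -> x < m) ->
  (forall y, Y y -> y < m') -> iso [set x | X x \/ x = m] [set y | Y y \/ y = m'].
Proof.
move=> P mX mY.
pose PP (b : bool) := if b then X else [set m].
pose QQ (b : bool) := if b then Y else [set m'].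
pose pp (b : bool) := if b then p else fun _ => m'.
pose qq (b : bool) := if b then q else fun _ => m.
have Pi b : piso (PP b) (QQ b) (pp b) (qq b).
  case: b => //; split; rewrite /PP /QQ /pp /qq /set1 //=.
  by move=> x y -> ->; rewrite ltxx.
have [|||||p' [q' [P' _]]] := @glue bool PP QQ pp qq [set x | X x \/ x = m]
  [set y | Y y \/ y = m'] Pi.
- rewrite /PP /set1; case; case => //= x; first by move=> + E; rewrite E => /mX; rewrite ltxx.
  by move=> E; rewrite E => /mX; rewrite ltxx.
- rewrite /QQ /set1; case; case => //= x; first by move=> + E; rewrite E => /mY; rewrite ltxx.
  by move=> E; rewrite E => /mY; rewrite ltxx.
- rewrite /PP /pp /set1; case; case => //= x y _.
    by move=> Xx E _; apply: mY; case: P => + _ _ _ _; apply.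
  by move=> E Xy; rewrite E => /(lt_trans (mX _ Xy)); rewrite ltxx.
- rewrite /PP /set1 => x /=; split => [[Xx|E]|[[]//=]]; [by exists true|by exists false|by left|by right].
- rewrite /QQ /set1 => x /=; split => [[Xx|E]|[[]//=]]; [by exists true|by exists false|by left|by right].
by exists p', q'.
Qed.

Lemma ismin_uniq C x y : ismin C x -> ismin C y -> x = y.
Proof. by move=> [Cx hx] [Cy hy]; apply/eqP; rewrite eq_le hx // hy. Qed.
Lemma ismax_uniq C x y : ismax C x -> ismax C y -> x = y.
Proof. by move=> [Cx hx] [Cy hy]; apply/eqP; rewrite eq_le hx // hy. Qed.

Lemma conv_iso (C D : set rat) : convex C -> convex D ->
  (exists x y, C x /\ C y /\ x < y) -> (exists x y, D x /\ D y /\ x < y) ->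
  (hasmin C <-> hasmin D) -> (hasmax C <-> hasmax D) -> iso C D.
Proof.
move=> cC cD tC tD mE ME.
have [icC neC nMC nmC] := interior_props cC tC.
have [icD neD nMD nmD] := interior_props cD tD.
have I0 := core_iso icC neC nMC nmC icD neD nMD nmD.
have minlt E x m : ismin E x -> interior E m -> x < m.
  by move=> [_ h] [y [z [Ey [_ [ym _]]]]]; apply: le_lt_trans (h _ Ey) ym.
have maxlt E x m : ismax E x -> interior E m -> m < x.
  by move=> [_ h] [y [z [_ [Ez [_ mz]]]]]; apply: lt_le_trans mz (h _ Ez).
have I1 : iso [set x | interior C x \/ ismin C x] [set x | interior D x \/ ismin D x].
  have [[m Hm]|nm] := pselect (hasmin C).
    have [m' Hm'] : hasmin D by apply/mE; exists m.
    case: I0 => p [q P].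
    apply: (iso_ext _ _ (add_lo P (fun x => minlt _ _ _ Hm) (fun x => minlt _ _ _ Hm'))).
      move=> x /=; split => -[h|h]; [by left|by right; rewrite h|by left|].
      by right; apply: ismin_uniq h Hm.
    move=> x /=; split => -[h|h]; [by left|by right; rewrite h|by left|].
    by right; apply: ismin_uniq h Hm'.
  apply: iso_ext I0.
    by move=> x /=; split => [h|[h|h]]; [left|by []|case: nm; exists x].
  move=> x /=; split => [h|[h|h]]; [left|by []|case: nm; apply/mE; exists x] => //.
have ltMm E x M : (exists x y, E x /\ E y /\ x < y) -> ismin E x -> ismax E M -> x < M.
  move=> [a [b [Ea [Eb ab]]]] [_ h1] [_ h2].
  exact: le_lt_trans (h1 _ Ea) (lt_le_trans ab (h2 _ Eb)).
have I2 : iso [set x | (interior C x \/ ismin C x) \/ ismax C x]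
              [set x | (interior D x \/ ismin D x) \/ ismax D x].
  have [[M HM]|nM] := pselect (hasmax C).
    have [M' HM'] : hasmax D by apply/ME; exists M.
    case: I1 => p [q P].
    have lC : forall x, interior C x \/ ismin C x -> x < M.
      by move=> x [h|h]; [apply: maxlt HM h| apply: ltMm HM].
    have lD : forall x, interior D x \/ ismin D x -> x < M'.
      by move=> x [h|h]; [apply: maxlt HM' h| apply: ltMm HM'].
    apply: (iso_ext _ _ (add_hi P lC lD)).
      move=> x /=; split => -[h|h]; [by left|by right; rewrite h|by left|].
      by right; apply: ismax_uniq h HM.
    move=> x /=; split => -[h|h]; [by left|by right; rewrite h|by left|].
    by right; apply: ismax_uniq h HM'.
  apply: iso_ext I1.
    by move=> x /=; split => [h|[h|h]]; [left|by []|case: nM; exists x].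
  move=> x /=; split => [h|[h|h]]; [left|by []|case: nM; apply/ME; exists x] => //.
have dec E : convex E -> forall x, E x <-> (interior E x \/ ismin E x) \/ ismax E x.
  move=> cE x; split; last first.
    move=> [[[y [z [Ey [Ez [yx xz]]]]]|[]//]|[]//].
    exact: cE Ey Ez (ltW yx) (ltW xz).
  move=> Ex; have [[y [Ey yx]]|nl] := pselect (exists y, E y /\ y < x).
    have [[z [Ez xz]]|nh] := pselect (exists z, E z /\ x < z).
      by left; left; exists y, z.
    right; split => // z Ez; rewrite leNgt; apply/negP => xz; apply: nh; by exists z.
  left; right; split => // z Ez; rewrite leNgt; apply/negP => zx; apply: nl; by exists z.
apply: iso_ext I2.
  by move=> x /=; symmetry; exact: dec.
by move=> x /=; symmetry; exact: dec.
Qed.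


Definition gap (A B : set rat) : set rat :=
  [set x | (forall y, A y -> y < x) /\ (forall y, B y -> x < y)].
Definition rsup (A : set rat) := exists r, (forall x, A x -> x <= r) /\
  forall y, (forall x, A x -> x <= y) -> r <= y.
Definition rinf (B : set rat) := exists r, (forall x, B x -> r <= x) /\
  forall y, (forall x, B x -> y <= x) -> y <= r.

Lemma gap_convex A B : convex (gap A B).
Proof.
move=> x y z [h1 h2] [h3 h4] xz zy; split.
  by move=> w /h1 /lt_le_trans; apply.
by move=> w /h4; apply: le_lt_trans.
Qed.

Lemma ub_strict (A : set rat) r : nomax A -> (forall x, A x -> x <= r) ->
  forall x, A x -> x < r.
Proof.
move=> nM ub x Ax; have [y [Ay xy]] := nM x Ax; exact: lt_le_trans xy (ub _ Ay).
Qed.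
Lemma lb_strict (B : set rat) r : nomin B -> (forall x, B x -> r <= x) ->
  forall x, B x -> r < x.
Proof.
move=> nm lb x Bx; have [y [By yx]] := nm x Bx; exact: le_lt_trans (lb _ By) yx.
Qed.

Lemma gap_min A B : nomax A -> nomin B -> (forall a b, A a -> B b -> a < b) ->
  hasmin (gap A B) <-> rsup A.
Proof.
move=> nM nm AB; split.
  move=> [m [[h1 h2] h3]]; exists m; split; first by move=> x /h1/ltW.
  move=> y uy; rewrite leNgt; apply/negP => ym.
  have : gap A B y.
    split; first exact: ub_strict.
    by move=> b /h2; apply: lt_trans.
  by move=> /h3; rewrite leNgt ym.
move=> [r [h1 h2]]; exists r; split.
  split; first exact: ub_strict.
  move=> b Bb; apply: (lb_strict nm) => // b' Bb'; apply: h2 => a Aa.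
  exact/ltW/AB.
by move=> x [k1 k2]; apply: h2 => a /k1/ltW.
Qed.

Lemma gap_max A B : nomax A -> nomin B -> (forall a b, A a -> B b -> a < b) ->
  hasmax (gap A B) <-> rinf B.
Proof.
move=> nM nm AB; split.
  move=> [m [[h1 h2] h3]]; exists m; split; first by move=> x /h2/ltW.
  move=> y uy; rewrite leNgt; apply/negP => ym.
  have : gap A B y.
    split; last exact: lb_strict.
    by move=> a /h1 am; apply: lt_trans am ym.
  by move=> /h3; rewrite leNgt ym.
move=> [r [h1 h2]]; exists r; split.
  split; last exact: lb_strict.
  move=> a Aa; apply: (ub_strict nM) => // a' Aa'; apply: h2 => b Bb.
  exact/ltW/AB.
by move=> x [k1 k2]; apply: h2 => b /k2/ltW.
Qed.


Lemma zpow_unb (f : aut) a : f a <> a -> forall n,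
  (exists k, zpow f n a < zpow f k a) /\ (exists k, zpow f k a < zpow f n a).
Proof.
move=> fa n.
have E1 : zpow f n a = zpow f (n - 1) (f a) by rewrite -zpow1 -zpowD subrK.
have E2 : zpow f (n + 1) a = zpow f n (f a) by rewrite (zpowD f n 1).
have [af|fa'] := ltP a (f a).
  split; first by exists (n + 1); rewrite E2 zpow_ltE.
  by exists (n - 1); rewrite E1 zpow_ltE.
have af : f a < a by rewrite lt_neqAle fa' andbT; apply/eqP.
split; first by exists (n - 1); rewrite E1 zpow_ltE.
by exists (n + 1); rewrite E2 zpow_ltE.
Qed.

Lemma orbital_nomax (f : aut) a : f a <> a -> nomax (orbital_of f a).
Proof.
move=> fa x [m [n [h1 h2]]]; have [[k hk] _] := zpow_unb fa n.
exists (zpow f k a); split; first exact: orb_zpow.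
exact: le_lt_trans h2 hk.
Qed.

Lemma orbital_nomin (f : aut) a : f a <> a -> nomin (orbital_of f a).
Proof.
move=> fa x [m [n [h1 h2]]]; have [_ [k hk]] := zpow_unb fa m.
exists (zpow f k a); split; first exact: orb_zpow.
exact: lt_le_trans hk h1.
Qed.

Lemma orbital_convex (f : aut) a : convex (orbital_of f a).
Proof. by move=> x y z hx hy xz zy; apply: orb_convex hx hy xz zy. Qed.

Lemma orbital_two (f : aut) a : f a <> a ->
  exists x y, orbital_of f a x /\ orbital_of f a y /\ x < y.
Proof.
move=> fa; have [af|fa'] := ltP a (f a).
  by exists a, (f a); split; [exact: orb_refl|split; [exact: orb_f|]].
exists (f a), a; split; first exact: orb_f.
by split; [exact: orb_refl| rewrite lt_neqAle fa' andbT; apply/eqP].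
Qed.

Lemma orbital_meet (f : aut) a b x : orbital_of f a x -> orbital_of f b x ->
  orbital_of f a = orbital_of f b.
Proof.
move=> ax bx; rewrite (orbital_eq ax) (orbital_eq bx) //.
Qed.

Definition sprec (A B : set rat) := forall x y, A x -> B y -> x < y.

Lemma orbital_cmp (f : aut) a b : orbital_of f a <> orbital_of f b ->
  sprec (orbital_of f a) (orbital_of f b) \/ sprec (orbital_of f b) (orbital_of f a).
Proof.
move=> ne.
have dj : forall x, orbital_of f a x -> orbital_of f b x -> False.
  by move=> x ax bx; apply: ne; apply: orbital_meet ax bx.
have key : forall c d, (forall x, orbital_of f c x -> orbital_of f d x -> False) ->
   c < d -> sprec (orbital_of f c) (orbital_of f d).
  move=> c d djc cd x y cx dy; rewrite ltNge; apply/negP => yx.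
  have [ay|ya] := leP c y.
    by apply: (djc y) => //; apply: orb_convex (orb_refl _ _) cx ay yx.
  apply: (djc c); first exact: orb_refl.
  exact: orb_convex dy (orb_refl _ _) (ltW ya) (ltW cd).
have [ab|ba] := ltP a b; first by left; apply: key.
have {}ba : b < a.
  rewrite lt_neqAle ba andbT; apply/eqP => E; apply: (dj a); first exact: orb_refl.
  by rewrite -E; exact: orb_refl.
by right; apply: key => // x bx ax; apply: (dj x).
Qed.

Definition orbclosed (f : aut) (W : set rat) := forall x y, W x -> orb_rel f x y -> W y.

Section Restr.
Variables (f : aut) (W : set rat) (HW : orbclosed f W).

Definition rfn x := if `[< W x >] then f x else x.
Definition rfinv x := if `[< W x >] then finv f x else x.

Lemma rfnK : cancel rfn rfinv.
Proof.
move=> x; rewrite /rfn /rfinv; case: (asboolP (W x)) => Wx.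
  have Wf : W (f x) by exact: (HW Wx (@orb_f f x)).
  by case: asboolP => // _; rewrite fnK.
by case: asboolP.
Qed.
Lemma rfinvK : cancel rfinv rfn.
Proof.
move=> x; rewrite /rfn /rfinv; case: (asboolP (W x)) => Wx.
  have Wf : W (finv f x) by exact: (HW Wx (@orb_finv f x)).
  by case: asboolP => // _; rewrite finvK.
by case: asboolP.
Qed.
Lemma rfn_mono x y : x < y -> rfn x < rfn y.
Proof.
move=> xy; rewrite /rfn; case: (asboolP (W x)) => Wx; case: (asboolP (W y)) => Wy.
- exact: fn_mono.
- rewrite ltNge; apply/negP => yfx; apply: Wy; apply: (HW Wx).
  by exists 0, 1; split; [exact: ltW|].
- rewrite ltNge; apply/negP => fyx; apply: Wx; apply: (HW Wy).
  by exists 1, 0; split; [|exact: ltW].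
- done.
Qed.

Definition restr : aut := @Aut rfn rfinv rfnK rfinvK rfn_mono.

Lemma restrE x : restr x = if `[< W x >] then f x else x. Proof. by []. Qed.
Lemma restr_in x : W x -> restr x = f x.
Proof. by rewrite restrE; case: asboolP. Qed.
Lemma restr_out x : ~ W x -> restr x = x.
Proof. by rewrite restrE; case: asboolP. Qed.

Lemma restr_orb x y : W x -> (orb_rel restr x y <-> orb_rel f x y).
Proof.
move=> Wx; symmetry; apply: (orb_agree (X := W)) => //.
- by move=> z Wz; rewrite restr_in.
- by move=> z Wz; exact: (HW Wz (@orb_f f _)).
- by move=> z Wz; exact: (HW Wz (@orb_finv f _)).
Qed.

Lemma restr_orbital x : W x -> orbital_of restr x = orbital_of f x.
Proof. by move=> Wx; apply/seteqP; split => y /=; rewrite /orbital_of /= restr_orb. Qed.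

Lemma restr_orb_out x y : ~ W x -> orb_rel restr x y -> y = x.
Proof. by move=> Wx; apply: orb_fix; rewrite restr_out. Qed.

End Restr.


Lemma nontriv_char (f : aut) O :
  nontriv_orbitals f O <-> exists a, f a <> a /\ O = orbital_of f a.
Proof.
split.
  move=> [[a ->] [b [c [hb [hc bc]]]]]; exists a; split => // fa.
  by apply: bc; rewrite (orb_fix fa hb) (orb_fix fa hc).
move=> [a [fa ->]]; split; first by exists a.
exists a, (f a); split; first exact: orb_refl.
by split; [exact: orb_f | move=> E; apply: fa; rewrite -E].
Qed.

Lemma inj_infinite T (S : set T) (u : nat -> T) :
  (forall n, S (u n)) -> (forall i j, u i = u j -> i = j) -> infinite_set S.
Proof.
move=> Su inj finS.
have : finite_set (u @^-1` S) by apply: finite_preimage => // i j _ _; apply: inj.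
have -> : u @^-1` S = setT by apply/seteqP; split => // n _; apply: Su.
exact: infinite_nat.
Qed.

Lemma supp_closed (g : aut) x : supp g x -> supp g (g x) /\ supp g (finv g x).
Proof.
rewrite /supp /= => gx; split.
  by move=> E; apply: gx; apply: (aut_inj g).
by move=> E; apply: gx; rewrite finvK in E; rewrite {1}E finvK.
Qed.

Lemma restriction_orb (g f : aut) : restriction g f ->
  forall x y, supp g x -> (orb_rel g x y <-> orb_rel f x y).
Proof.
move=> [sub ag] x y sx; apply: (orb_agree (X := supp g)) => //.
- by move=> z /supp_closed [].
- by move=> z /supp_closed [].
Qed.

Lemma dir1 (f : aut) : (exists g g1 g2 : aut,
      restriction g f /\ orbital_elt g1 g /\ is_prod g g1 g2 /\ conjugate g g2) ->
  infinite_set (nontriv_orbitals f).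
Proof.
move=> [g [g1 [g2 [Rgf [[[[a g1a] _] [sub1 ag1]] [pr [h gh]]]]]]].
pose A := supp g1.
have g1A : forall y, A y -> A (g1 y) by move=> y /supp_closed [].
have g1iA : forall y, A y -> A (finv g1 y) by move=> y /supp_closed [].
have F1 : forall y, A y -> g2 y = y.
  move=> y Ay; apply: (aut_inj g1); rewrite -pr ag1 //.
have F2 : forall y, ~ A y -> g2 y = g y /\ ~ A (g y).
  move=> y nAy.
  have nA : ~ A (g y).
    move=> Agy; apply: nAy.
    have z_eq : finv g1 (g y) = y.
      apply: (aut_inj g); rewrite -ag1 ?finvK //; exact: g1iA.
    by rewrite -z_eq; apply: g1iA.
  split => //; apply: (aut_inj g1); rewrite -pr.
  have e : g1 (g y) = g y by case: (pselect (g1 (g y) = g y)) => // hh; case: nA.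
  by rewrite e.
have F3 : forall y, ~ A y -> ~ A (finv g y).
  move=> y nAy Ay; apply: nAy; rewrite -(finvK g y) -ag1 //; exact: g1A.
have orbE : forall x y, ~ A x -> (orb_rel g x y <-> orb_rel g2 x y).
  move=> x y nAx; apply: (orb_agree (X := fun z => ~ A z)) => //.
  - by move=> z /F2 [-> _].
  - by move=> z /F2 [].
pose b := fix b n := if n is n'.+1 then finv h (b n') else a.
have bS n : h (b n.+1) = b n by rewrite /= finvK.
have mv : forall n, g (b n) <> b n /\ (n != 0%N -> ~ A (b n)).
  elim=> [|n [IH _]]; first by split => //; rewrite /= -ag1.
  have g2m : g2 (b n.+1) <> b n.+1.
    by move=> E; apply: IH; rewrite -{1 2}(bS n) gh E.
  have nA : ~ A (b n.+1) by move=> /F1.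
  by split => //; have [<- _] := F2 _ nA.
have noorb : forall i j, (i < j)%N -> ~ orb_rel g (b i) (b j).
  elim=> [|i IH] j ij.
    case: j ij => // j _ /= orb.
    have nA : ~ A (b j.+1) by apply: (mv j.+1).2.
    have : orb_rel g2 (b j.+1) a by apply/orbE => //; apply: orb_sym.
    move/orb_sym => /(orb_fix (F1 a g1a)) E.
    by apply: nA; rewrite E.
  case: j ij => // j ij orb.
  have nA : ~ A (b i.+1) by apply: (mv i.+1).2.
  have : orb_rel g2 (b i.+1) (b j.+1) by apply/orbE.
  move/(orb_conj gh); rewrite !bS; apply: IH; done.
apply: (@inj_infinite _ _ (fun n => orbital_of f (b n))).
  move=> n; apply/nontriv_char; exists (b n); split => //.
  have [gm _] := mv n; have [sub _] := Rgf.
  by move: (sub (b n) gm).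
move=> i j E.
have oij : forall i j, orbital_of f (b i) = orbital_of f (b j) -> orb_rel g (b i) (b j).
  move=> i' j' E'; apply/(restriction_orb Rgf); first exact: (mv i').1.
  have : orbital_of f (b j') (b j') by exact: orb_refl.
  by rewrite -E'.
have [lt|ge] := ltnP i j; first by case: (noorb _ _ lt); apply: oij.
move: ge; rewrite leq_eqVlt => /orP[/eqP //|lt].
by case: (noorb _ _ lt); apply: oij.
Qed.


Section Neg.
Variable f : aut.
Definition nfn x := - f (- x).
Definition nfinv x := - finv f (- x).
Lemma nfnK : cancel nfn nfinv. Proof. by move=> x; rewrite /nfn /nfinv opprK fnK opprK. Qed.
Lemma nfinvK : cancel nfinv nfn. Proof. by move=> x; rewrite /nfn /nfinv opprK finvK opprK. Qed.
Lemma nfn_mono x y : x < y -> nfn x < nfn y.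
Proof. by move=> xy; rewrite /nfn ltrN2; apply: fn_mono; rewrite ltrN2. Qed.
Definition negf : aut := @Aut nfn nfinv nfnK nfinvK nfn_mono.
Lemma negfE x : negf x = - f (- x). Proof. by []. Qed.
End Neg.

Lemma zpow_neg f k x : zpow (negf f) k x = - zpow f k (- x).
Proof.
have E1 n y : iter n (nfn f) y = - iter n f (- y).
  by elim: n => [|n IH]; rewrite ?opprK // !iterS IH /nfn opprK.
have E2 n y : iter n (nfinv f) y = - iter n (finv f) (- y).
  by elim: n => [|n IH]; rewrite ?opprK // !iterS IH /nfinv opprK.
by case: k => n; [exact: E1|exact: E2].
Qed.

Lemma orb_neg f x y : orb_rel (negf f) x y <-> orb_rel f (- x) (- y).
Proof.
split => -[m [n [h1 h2]]].
  exists n, m; rewrite !zpow_neg in h1 h2; split; first by rewrite lerNr.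
  by rewrite lerNl.
exists n, m; rewrite !zpow_neg; split; first by rewrite lerNl.
by rewrite lerNr.
Qed.

Lemma orbital_neg f x : orbital_of (negf f) x = [set y | orbital_of f (- x) (- y)].
Proof. by apply/seteqP; split => y /=; rewrite /orbital_of /= orb_neg. Qed.

Lemma negf_moved f x : (negf f x = x) <-> (f (- x) = - x).
Proof.
rewrite negfE; split => h; first by apply: oppr_inj; rewrite h opprK.
by rewrite h opprK.
Qed.

Lemma rsup_neg (B : set rat) : rsup [set y | B (- y)] <-> rinf B.
Proof.
split => -[r [h1 h2]]; exists (- r); split.
- by move=> x Bx; rewrite lerNl; apply: h1; rewrite /= opprK.
- move=> y hy; rewrite lerNr; apply: h2 => x /= /hy; by rewrite lerNr.
- by move=> x /= /h1; rewrite lerNr.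
- move=> y hy; rewrite lerNl; apply: h2 => x Bx; rewrite lerNl; apply: hy; by rewrite /= opprK.
Qed.

Lemma rinf_neg (B : set rat) : rinf [set y | B (- y)] <-> rsup B.
Proof.
split => -[r [h1 h2]]; exists (- r); split.
- by move=> x Bx; rewrite lerNr; apply: h1; rewrite /= opprK.
- move=> y hy; rewrite lerNl; apply: h2 => x /= /hy; by rewrite lerNl.
- by move=> x /= /h1; rewrite lerNl.
- move=> y hy; rewrite lerNr; apply: h2 => x Bx; rewrite lerNr; apply: hy; by rewrite /= opprK.
Qed.

Lemma supp_neg g x : supp (negf g) x <-> supp g (- x).
Proof. by rewrite /supp /=; split => h E; apply: h; apply/negf_moved. Qed.

Lemma bump_neg g : is_bump g -> is_bump (negf g).
Proof.
move=> [[x gx] [A EA]]; split.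
  by exists (- x) => /negf_moved; rewrite opprK.
exists [set y | A (- y)]; apply/seteqP; split => O /=.
  move=> /nontriv_char [y [gy ->]]; rewrite orbital_neg.
  have : nontriv_orbitals g (orbital_of g (- y)).
    by apply/nontriv_char; exists (- y); split => // E; apply: gy; apply/negf_moved.
  by rewrite EA /= => ->.
move=> ->; have : nontriv_orbitals g A by rewrite EA.
move=> /nontriv_char [y [gy ->]]; apply/nontriv_char; exists (- y); split.
  by move/negf_moved; rewrite opprK.
by rewrite orbital_neg opprK.
Qed.

Lemma transfer_neg f : (exists g g1 g2 : aut,
      restriction g (negf f) /\ orbital_elt g1 g /\ is_prod g g1 g2 /\ conjugate g g2) ->
  (exists g g1 g2 : aut,
      restriction g f /\ orbital_elt g1 g /\ is_prod g g1 g2 /\ conjugate g g2).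
Proof.
move=> [g [g1 [g2 [[Rs Ra] [[B [S1 A1]] [P [h C]]]]]]].
exists (negf g), (negf g1), (negf g2); split; last split; last split.
- split.
    move=> x /supp_neg /Rs /supp_neg; by rewrite opprK.
  by move=> x /supp_neg sx; rewrite !negfE Ra // negfE !opprK.
- split; first exact: bump_neg.
  split; first by move=> x /supp_neg /S1 /supp_neg.
  by move=> x /supp_neg sx; rewrite !negfE A1.
- by move=> x; rewrite !negfE P opprK.
- exists (negf h) => x; rewrite !negfE !opprK; congr (- _); exact: C.
Qed.


Lemma dep_choice T (Z : set T) (R : T -> T -> Prop) z0 : Z z0 ->
  (forall z, Z z -> exists w, Z w /\ R z w) ->
  exists u : nat -> T, (forall n, Z (u n)) /\ forall n, R (u n) (u n.+1).
Proof.
move=> Zz0 step.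
have ex : forall z, exists w, Z z -> Z w /\ R z w.
  move=> z; case: (pselect (Z z)) => [h|h]; last by exists z.
  by have [w hw] := step z h; exists w.
have [nx Hnx] := choice ex.
pose u := fix u n := if n is n'.+1 then nx (u n') else z0.
have Zu : forall n, Z (u n) by elim=> [|n IH] //=; case: (Hnx _ IH).
by exists u; split => // n /=; case: (Hnx _ (Zu n)).
Qed.

Lemma not_infinite T (A : set T) : ~ infinite_set A -> finite_set A.
Proof. by move=> h; apply: contrapT. Qed.

Lemma mono_seq T (S : set T) (lt : T -> T -> Prop) :
  infinite_set S ->
  (forall x y z, lt x y -> lt y z -> lt x z) -> (forall x, ~ lt x x) ->
  (forall x y, S x -> S y -> x <> y -> lt x y \/ lt y x) ->
  exists u : nat -> T, (forall n, S (u n)) /\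
    ((forall n, lt (u n) (u n.+1)) \/ (forall n, lt (u n.+1) (u n))).
Proof.
move=> infS tr irr tot.
pose Up x := [set y | S y /\ lt x y].
pose Y := [set x | S x /\ infinite_set (Up x)].
have [[[y0 Yy0] stepY]|nA] := pselect ((exists y, Y y) /\ forall x, Y x -> exists y, Y y /\ lt x y).
  have [u [Yu Ru]] := dep_choice Yy0 stepY.
  by exists u; split; [move=> n; case: (Yu n)|left].
have [Z [infZ [ZS finUp]]] : exists Z : set T, infinite_set Z /\ (forall z, Z z -> S z) /\
    forall z, Z z -> finite_set (Up z).
  have [[m Ym]|nY] := pselect (exists m, Y m); last first.
    exists S; split => //; split => // z Sz; apply: not_infinite => iz; apply: nY.
    by exists z.
  have [[x [Yx hx]]|nM] := pselect (exists x, Y x /\ forall y, Y y -> ~ lt x y).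
    exists (Up x); split; first by case: Yx.
    split; first by move=> z [].
    move=> z [Sz xz]; apply: not_infinite => iz; exact: hx z (conj Sz iz) xz.
  exfalso; apply: nA; split; first by exists m.
  move=> x Yx; apply: contrapT => nex; apply: nM; exists x; split => // y Yy xy.
  by apply: nex; exists y.
have step : forall z, Z z -> exists w, Z w /\ lt w z.
  move=> z Zz; apply: contrapT => nw; apply: infZ.
  apply: (@sub_finite_set _ _ (Up z `|` [set z])); last first.
    by rewrite finite_setU; split; [exact: finUp|exact: finite_set1].
  move=> w Zw; case: (pselect (w = z)) => [->|wz]; first by right.
  left; case: (tot _ _ (ZS _ Zw) (ZS _ Zz) wz) => h; last by split => //; exact: ZS.
  by case: nw; exists w.
have [z0 Zz0] : exists z, Z z by have [z hz] := infinite_setN0 infZ; exists z.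
have [u [Zu Ru]] := dep_choice Zz0 step.
by exists u; split; [move=> n; exact: ZS|right].
Qed.

Lemma pigeon T (K : finType) (S : set T) (key : T -> K) : infinite_set S ->
  exists k, infinite_set [set x | S x /\ key x = k].
Proof.
move=> infS; apply: contrapT => nk; apply: infS.
have fin k : finite_set [set x | S x /\ key x = k].
  by apply: not_infinite => h; apply: nk; exists k.
apply: (@sub_finite_set _ _ (\bigcup_(k in setT) [set x | S x /\ key x = k])).
  by move=> x Sx; exists (key x).
by apply: bigcup_finite; [exact: finite_finset| move=> k _; exact: fin].
Qed.


Lemma glue2 X Y X' Y' p q p' q' : piso X Y p q -> piso X' Y' p' q' ->
  sprec X X' -> sprec Y Y' ->
  exists P Q, piso [set x | X x \/ X' x] [set y | Y y \/ Y' y] P Q /\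
    (forall x, X x -> P x = p x) /\ (forall x, X' x -> P x = p' x).
Proof.
move=> P1 P2 sX sY.
pose PP (b : bool) := if b then X else X'.
pose QQ (b : bool) := if b then Y else Y'.
pose pp (b : bool) := if b then p else p'.
pose qq (b : bool) := if b then q else q'.
have Pi b : piso (PP b) (QQ b) (pp b) (qq b) by case: b.
have [|||||P [Q [PQ [E1 _]]]] := @glue bool PP QQ pp qq [set x | X x \/ X' x]
  [set y | Y y \/ Y' y] Pi.
- rewrite /PP; case; case => //= x h1 h2; first by have := sX _ _ h1 h2; rewrite ltxx.
  by have := sX _ _ h2 h1; rewrite ltxx.
- rewrite /QQ; case; case => //= x h1 h2; first by have := sY _ _ h1 h2; rewrite ltxx.
  by have := sY _ _ h2 h1; rewrite ltxx.
- rewrite /PP /pp; case; case => //= x y _ h1 h2 xy.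
    apply: sY; [by case: P1 => + _ _ _ _; apply|by case: P2 => + _ _ _ _; apply].
  by have := lt_trans xy (sX _ _ h2 h1); rewrite ltxx.
- by move=> x /=; split => [[h|h]|[[] h]]; [exists true|exists false|left|right].
- by move=> x /=; split => [[h|h]|[[] h]]; [exists true|exists false|left|right].
exists P, Q; split => //; split => x h; [exact: (E1 true)|exact: (E1 false)].
Qed.

Section MC.
Variables (f : aut) (a : nat -> rat).
Hypothesis Hmv : forall n, f (a n) <> a n.
Hypothesis Hadj : forall n, sprec (orbital_of f (a n)) (orbital_of f (a n.+1)).
Hypothesis Hdir : forall n, (a n < f (a n)) = (a 0%N < f (a 0%N)).
Hypothesis Hsup : forall n, rsup (orbital_of f (a n)) <-> rsup (orbital_of f (a 0%N)).
Hypothesis Hinf : forall n, rinf (orbital_of f (a n)) <-> rinf (orbital_of f (a 0%N)).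

Let O n := orbital_of f (a n).

Lemma Ochain i j : (i < j)%N -> sprec (O i) (O j).
Proof.
elim: j => // j IH; rewrite ltnS leq_eqVlt => /orP[/eqP->|lt]; first exact: Hadj.
move=> x y Ox Oy; have := IH lt x (a j) Ox (orb_refl _ _).
move=> /lt_trans; apply; exact: Hadj (orb_refl _ _) Oy.
Qed.

Let c n := a (n.*2.+1).
Let A n := O (n.*2.+1).

Lemma Achain i j : (i < j)%N -> sprec (A i) (A j).
Proof. move=> ij; apply: Ochain; rewrite ltnS ltn_double //. Qed.

Lemma Ac n : A n (c n). Proof. exact: orb_refl. Qed.

Lemma Adisj i j x : A i x -> A j x -> i = j.
Proof.
move=> hi hj; case: (ltngtP i j) => // lt.
  by have := Achain lt hi hj; rewrite ltxx.
by have := Achain lt hj hi; rewrite ltxx.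
Qed.

Definition W := [set x | exists n, A n x].
Definition W1 := A 0.
Definition W2 := [set x | exists n, A n.+1 x].

Lemma Wc : orbclosed f W.
Proof. by move=> x y [n hn] xy; exists n; apply: orb_trans hn xy. Qed.
Lemma W1c : orbclosed f W1.
Proof. by move=> x y hn xy; apply: orb_trans hn xy. Qed.
Lemma W2c : orbclosed f W2.
Proof. by move=> x y [n hn] xy; exists n; apply: orb_trans hn xy. Qed.

Definition g := restr Wc.
Definition g1 := restr W1c.
Definition g2 := restr W2c.

Lemma Af n x : A n x -> A n (f x). Proof. exact: orb_closed_f. Qed.

Lemma g_prod : is_prod g g1 g2.
Proof.
move=> x; rewrite /g /g1 /g2.
have [h1|n1] := pselect (W1 x).
  have n2 : ~ W2 x by move=> [n hn]; have := Adisj h1 hn.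
  have hW : W x by exists 0%N.
  by rewrite (restr_out W2c n2) (restr_in W1c h1) (restr_in Wc hW).
have [h2|n2] := pselect (W2 x).
  have nf : ~ W1 (f x) by case: h2 => n hn h; have := Adisj (Af hn) h.
  have hW : W x by case: h2 => n hn; exists n.+1.
  by rewrite (restr_in W2c h2) (restr_out W1c nf) (restr_in Wc hW).
have nW : ~ W x by case=> -[|n] hn; [apply: n1|apply: n2; exists n].
by rewrite (restr_out W2c n2) (restr_out W1c n1) (restr_out Wc nW).
Qed.

Lemma g_restr : restriction g f.
Proof.
have inW : forall x, supp g x -> W x.
  by move=> x; rewrite /supp /= /g /rfn; case: (asboolP (W x)).
split => x sx; have Wx := inW x sx; last by rewrite /g (restr_in Wc Wx).
by move: (sx : g x <> x); rewrite /g (restr_in Wc Wx).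
Qed.

Lemma g1_orb : orbital_elt g1 g.
Proof.
have inW1 : forall x, supp g1 x -> W1 x.
  by move=> x; rewrite /supp /= /g1 /rfn; case: (asboolP (W1 x)).
have W1W : forall x, W1 x -> W x by move=> x h; exists 0%N.
split; last split.
- split.
    by exists (c 0%N); rewrite /g1 (restr_in W1c (Ac 0)); exact: Hmv.
  exists (A 0%N); apply/seteqP; split => O' /=.
    move=> /nontriv_char [x [gx ->]].
    have Wx := inW1 x gx; rewrite /g1 (restr_orbital W1c Wx).
    by apply: orbital_eq; apply: orb_sym.
  move=> ->; apply/nontriv_char; exists (c 0%N); split.
    by rewrite /g1 (restr_in W1c (Ac 0)); exact: Hmv.
  by rewrite /g1 (restr_orbital W1c (Ac 0)).
- move=> x sx; have W1x := inW1 x sx; move: (sx : g1 x <> x).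
  change (g1 x <> x -> g x <> x).
  by rewrite /g /g1 (restr_in Wc (W1W _ W1x)) (restr_in W1c W1x).
- move=> x sx; have W1x := inW1 x sx.
  by rewrite /g /g1 (restr_in Wc (W1W _ W1x)) (restr_in W1c W1x).
Qed.

Definition Gp n := gap (A n) (A n.+1).
Definition Lb n := gap set0 (A n).
Definition Bk n := [set x | A n x \/ Gp n x].
Definition S k := if k is k'.+1 then Bk k'.+1 else Lb 1.
Definition T k := if k is k'.+1 then Bk k' else Lb 0.
Definition F := [set x | forall n y, A n y -> y < x].

Lemma A_nomax n : nomax (A n). Proof. exact: orbital_nomax. Qed.
Lemma A_nomin n : nomin (A n). Proof. exact: orbital_nomin. Qed.
Lemma A_convex n : convex (A n). Proof. exact: orbital_convex. Qed.

Lemma Lb_mono i j x : (i <= j)%N -> Lb i x -> Lb j x.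
Proof.
rewrite leq_eqVlt => /orP[/eqP<-//|ij] [_ h]; split => // y Ay.
exact: lt_trans (h _ (Ac i)) (Achain ij (Ac i) Ay).
Qed.

Lemma Lb_notA n m x : Lb n x -> (n <= m)%N -> ~ A m x.
Proof.
move=> L nm Ax; have [_ h] := Lb_mono nm L.
by have := h _ Ax; rewrite ltxx.
Qed.

Lemma Gp_notA n m x : Gp n x -> ~ A m x.
Proof.
move=> [h1 h2] Ax; case: (leqP m n) => mn.
  move: mn; rewrite leq_eqVlt => /orP[/eqP E|lt].
    by subst m; move: (h1 _ Ax); rewrite ltxx.
  by have := lt_trans (Achain lt Ax (Ac n)) (h1 _ (Ac n)); rewrite ltxx.
move: mn; rewrite leq_eqVlt => /orP[/eqP E|lt].
  by subst m; move: (h2 _ Ax); rewrite ltxx.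
by have := lt_trans (h2 _ (Ac n.+1)) (Achain lt (Ac n.+1) Ax); rewrite ltxx.
Qed.

Lemma F_notA n x : F x -> ~ A n x.
Proof. by move=> h Ax; have := h _ _ Ax; rewrite ltxx. Qed.

Lemma Bk_below n x : Bk n x -> Lb n.+1 x.
Proof.
move=> [Ax|[_ h]]; split => //.
by move=> y Ay; have := Achain (ltnSn n) Ax Ay.
Qed.

Lemma S_below k x : S k x -> Lb k.+1 x.
Proof. by case: k => [//|k]; apply: Bk_below. Qed.
Lemma T_below k x : T k x -> Lb k x.
Proof. by case: k => [//|k]; apply: Bk_below. Qed.

Lemma Bk_above n x : Bk n x -> exists y, A n y /\ y <= x.
Proof.
move=> [Ax|[h _]]; first by exists x.
by exists (c n); split; [exact: Ac | exact/ltW/h/Ac].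
Qed.

Lemma Lb_lt_Bk i n x y : Lb i x -> (i <= n)%N -> Bk n y -> x < y.
Proof.
move=> L iN /Bk_above [z [Az zy]]; have [_ h] := Lb_mono iN L.
exact: lt_le_trans (h _ Az) zy.
Qed.

Lemma S_lt j k x y : (j < k)%N -> S j x -> S k y -> x < y.
Proof.
case: k => // k jk Sx Sy; apply: (Lb_lt_Bk (S_below Sx)) Sy => //.
Qed.

Lemma T_lt j k x y : (j < k)%N -> T j x -> T k y -> x < y.
Proof.
case: k => // k jk Tx Ty; apply: (Lb_lt_Bk (T_below Tx)) Ty => //.
Qed.

Lemma Lb_lt_F n x y : Lb n x -> F y -> x < y.
Proof. move=> [_ h] Fy; exact: lt_trans (h _ (Ac n)) (Fy _ _ (Ac n)). Qed.

Lemma first_above x : ~ F x -> exists n, (exists y, A n y /\ x <= y) /\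
   forall m, (m < n)%N -> forall y, A m y -> y < x.
Proof.
move=> nF.
pose P := fun n => asbool (exists y, A n y /\ x <= y).
have ex : exists n, P n.
  apply: contrapT => nex; apply: nF => n y Ay; rewrite ltNge; apply/negP => xy.
  by apply: nex; exists n; apply/asboolP; exists y.
case: (ex_minnP ex) => n /asboolP hn hmin; exists n; split => // m mn y Ay.
rewrite ltNge; apply/negP => xy.
have Pm : P m by apply/asboolP; exists y.
by have := hmin m Pm; rewrite leqNgt mn.
Qed.

Lemma A_or_below n x y : A n y -> x <= y -> A n x \/ (forall z, A n z -> x < z).
Proof.
move=> Ay xy; have [[z [Az zx]]|nz] := pselect (exists z, A n z /\ z <= x).
  by left; apply: A_convex Az Ay zx xy.
right => z Az; rewrite ltNge; apply/negP => zx; apply: nz; by exists z.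
Qed.

Lemma S_cover x : F x \/ exists k, S k x.
Proof.
have [Fx|nF] := pselect (F x); first by left.
right; have [n [[y [Ay xy]] hm]] := first_above nF.
case: n Ay xy hm => [|m] Ay xy hm.
  exists 0%N; split => // z Az; exact: le_lt_trans xy (Achain (ltnSn 0) Ay Az).
case: (A_or_below Ay xy) => [Ax|blw]; first by exists m.+1; left.
case: m Ay xy hm blw => [|m] Ay xy hm blw; first by exists 0%N; split.
exists m.+1; right; split => //; apply: hm; exact: ltnSn.
Qed.

Lemma T_cover x : F x \/ exists k, T k x.
Proof.
have [Fx|nF] := pselect (F x); first by left.
right; have [n [[y [Ay xy]] hm]] := first_above nF.
case: (A_or_below Ay xy) => [Ax|blw].
  by exists n.+1; left.
case: n Ay xy hm blw => [|m] Ay xy hm blw; first by exists 0%N; split.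
exists m.+1; right; split => //; apply: hm; exact: ltnSn.
Qed.

Lemma O_two n : exists x y, O n x /\ O n y /\ x < y.
Proof. exact: orbital_two. Qed.

Lemma Lb_two n : exists x y, Lb n x /\ Lb n y /\ x < y.
Proof.
have [x [y [Ox [Oy xy]]]] := O_two n.*2.
have sp : sprec (O n.*2) (A n) by apply: Ochain.
by exists x, y; split; [split => // z /sp; apply|split => //; split => // z /sp; apply].
Qed.

Lemma Gp_two n : exists x y, Gp n x /\ Gp n y /\ x < y.
Proof.
have [x [y [Ox [Oy xy]]]] := O_two n.*2.+2.
have sp1 : sprec (A n) (O n.*2.+2) by apply: Ochain.
have sp2 : sprec (O n.*2.+2) (A n.+1) by apply: Ochain; rewrite doubleS.
exists x, y; split; first by split => z Az; [apply: sp1|apply: sp2].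
by split => //; split => z Az; [apply: sp1|apply: sp2].
Qed.

Lemma set0_nomax : nomax (@set0 rat). Proof. by move=> x. Qed.
Lemma sprec0 B : sprec set0 B. Proof. by move=> x y. Qed.

Lemma iso_Lb : iso (Lb 1) (Lb 0).
Proof.
apply: conv_iso; try exact: gap_convex; try exact: Lb_two.
  rewrite /Lb !gap_min //; try exact: A_nomin; try exact: set0_nomax; exact: sprec0.
rewrite /Lb !gap_max //; try exact: A_nomin; try exact: set0_nomax; try exact: sprec0.
by rewrite /A /O Hinf [X in _ <-> X]Hinf.
Qed.

Lemma iso_Gp k : iso (Gp k.+1) (Gp k).
Proof.
have sp n : sprec (A n) (A n.+1) by apply: Achain.
apply: conv_iso; try exact: gap_convex; try exact: Gp_two.
  rewrite /Gp !gap_min //; try exact: A_nomin; try exact: A_nomax; try exact: sp.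
  by rewrite /A /O Hsup [X in _ <-> X]Hsup.
rewrite /Gp !gap_max //; try exact: A_nomin; try exact: A_nomax; try exact: sp.
by rewrite /A /O Hinf [X in _ <-> X]Hinf.
Qed.

Lemma g_out x : (forall n, ~ A n x) -> g x = x.
Proof. by move=> h; rewrite /g (restr_out Wc) // => -[n /h]. Qed.
Lemma g2_out x : (forall n, ~ A n.+1 x) -> g2 x = x.
Proof. by move=> h; rewrite /g2 (restr_out W2c) // => -[n /h]. Qed.
Lemma g_in n x : A n x -> g x = f x.
Proof. by move=> h; rewrite /g (restr_in Wc) //; exists n. Qed.
Lemma g2_in n x : A n.+1 x -> g2 x = f x.
Proof. by move=> h; rewrite /g2 (restr_in W2c) //; exists n. Qed.

Lemma block k : exists p q, piso (S k) (T k) p q /\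
  forall x, S k x -> S k (g2 x) /\ g (p x) = p (g2 x).
Proof.
case: k => [|k].
  have [p [q P]] := iso_Lb; exists p, q; split => // x Sx.
  have nA : forall n, ~ A n.+1 x by move=> n Ax; apply: (Lb_notA Sx _ Ax).
  rewrite g2_out // g_out //.
  case: P => + _ _ _ _ => /(_ x Sx) Tx n; exact: (Lb_notA Tx).
have Hd : (c k.+1 < f (c k.+1)) = (c k < f (c k)) by rewrite /c !Hdir.
have [b1 [b2 [Pb Cb]]] := bump_conj Hd (@Hmv _) (@Hmv _).
have [g3 [g4 Pg]] := iso_Gp k.
have sp1 : sprec (A k.+1) (Gp k.+1) by move=> x y Ax [h _]; apply: h.
have sp2 : sprec (A k) (Gp k) by move=> x y Ax [h _]; apply: h.
have [P [Q [PQ [E1 E2]]]] := glue2 Pb Pg sp1 sp2.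
exists P, Q; split => // x [Ax|Gx].
  have Afx : A k.+1 (f x) := Af Ax.
  rewrite (g2_in Ax); split; first by left.
  rewrite (E1 _ Afx) (E1 _ Ax) (Cb _ Ax).
  by apply: (g_in (n := k)); case: Pb => + _ _ _ _; apply.
rewrite g2_out; last by move=> n; apply: Gp_notA Gx.

split; first by right.
rewrite (E2 _ Gx) g_out // => n; apply: (@Gp_notA k).
by case: Pg => + _ _ _ _; apply.
Qed.

Lemma g_conj : conjugate g g2.
Proof.
have HB : forall k, exists pq : (rat -> rat) * (rat -> rat),
    piso (S k) (T k) pq.1 pq.2 /\ forall x, S k x -> S k (g2 x) /\ g (pq.1 x) = pq.1 (g2 x).
  by move=> k; have [p [q H]] := block k; exists (p, q).
have [PQ HPQ] := choice HB.
pose PP o := match o with Some k => S k | None => F end.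
pose QQ o := match o with Some k => T k | None => F end.
pose pp o := match o with Some k => (PQ k).1 | None => id end.
pose qq o := match o with Some k => (PQ k).2 | None => id end.
have Pi o : piso (PP o) (QQ o) (pp o) (qq o).
  by case: o => [k|]; [case: (HPQ k)|split].
have SF k x : S k x -> F x -> False.
  by move=> /S_below Sx /(Lb_lt_F Sx); rewrite ltxx.
have TF k x : T k x -> F x -> False.
  by move=> /T_below Sx /(Lb_lt_F Sx); rewrite ltxx.
have [|||||h [hi [Ph [Eh _]]]] := @glue (option nat) PP QQ pp qq setT setT Pi.
- case=> [j|] [k|] x //=.
  + move=> Sj Sk; congr Some; case: (ltngtP j k) => // lt.
      by have := S_lt lt Sj Sk; rewrite ltxx.
    by have := S_lt lt Sk Sj; rewrite ltxx.
  + by move=> h1 h2; case: (SF _ _ h1 h2).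
  + by move=> h1 h2; case: (SF _ _ h2 h1).
- case=> [j|] [k|] x //=.
  + move=> Sj Sk; congr Some; case: (ltngtP j k) => // lt.
      by have := T_lt lt Sj Sk; rewrite ltxx.
    by have := T_lt lt Sk Sj; rewrite ltxx.
  + by move=> h1 h2; case: (TF _ _ h1 h2).
  + by move=> h1 h2; case: (TF _ _ h2 h1).
- case=> [j|] [k|] x y //= ne.
  + move=> Sx Sy xy; case: (ltngtP j k) => lt.
    * apply: (T_lt lt); [by case: (Pi (Some j)) => + _ _ _ _; apply|].
      by case: (Pi (Some k)) => + _ _ _ _; apply.
    * by have := lt_trans xy (S_lt lt Sy Sx); rewrite ltxx.
    * by case: ne; rewrite lt.
  + move=> Sx Fy _; apply: (Lb_lt_F _ Fy); apply: (@T_below j).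
    by case: (Pi (Some j)) => + _ _ _ _; apply.
  + by move=> Fx Sy xy; have := lt_trans xy (Lb_lt_F (S_below Sy) Fx); rewrite ltxx.
- by move=> x; split => // _; case: (S_cover x) => [Fx|[k Sk]]; [exists None|exists (Some k)].
- by move=> x; split => // _; case: (T_cover x) => [Fx|[k Sk]]; [exists None|exists (Some k)].
exists (aut_of_piso Ph) => x; rewrite !aut_of_pisoE.
case: (S_cover x) => [Fx|[k Sk]].
  have nA : forall n, ~ A n x by move=> n; apply: F_notA.
  rewrite g2_out; last by move=> n; apply: nA.
  by rewrite (Eh None x Fx) g_out.
have [S2 E] := (HPQ k).2 x Sk.
by rewrite (Eh (Some k) x Sk) (Eh (Some k) _ S2) E.
Qed.

Lemma MC_main : exists g g1 g2 : aut,
      restriction g f /\ orbital_elt g1 g /\ is_prod g g1 g2 /\ conjugate g g2.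
Proof.
exists g, g1, g2; split; first exact: g_restr.
split; first exact: g1_orb.
split; first exact: g_prod.
exact: g_conj.
Qed.

End MC.


Lemma asbool_iff (P Q : Prop) : `[< P >] = `[< Q >] -> (P <-> Q).
Proof. by case: asboolP; case: asboolP. Qed.

Lemma dir2 (f : aut) : infinite_set (nontriv_orbitals f) ->
  exists g g1 g2 : aut,
      restriction g f /\ orbital_elt g1 g /\ is_prod g g1 g2 /\ conjugate g g2.
Proof.
move=> inf.
have exr : forall O, exists a, nontriv_orbitals f O -> f a <> a /\ O = orbital_of f a.
  move=> O; case: (pselect (nontriv_orbitals f O)) => [h|h]; last by exists 0.
  by have [a ha] := (nontriv_char f O).1 h; exists a.
have [rep Hrep] := choice exr.
pose key (O : set rat) : bool * bool * bool :=
  (rep O < f (rep O), `[< rsup O >], `[< rinf O >]).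
have [k infk] := pigeon key inf.
pose lt (O O' : set rat) := sprec O O' /\ exists x, O x.
have [|||u [Su Hu]] := @mono_seq _ _ lt infk.
- move=> x y z [xy [p xp]] [yz [q yq]]; split; last by exists p.
  move=> s t xs zt; exact: lt_trans (xy _ _ xs yq) (yz _ _ yq zt).
- by move=> x [h [p xp]]; have := h _ _ xp xp; rewrite ltxx.
- move=> x y [Nx _] [Ny _] xy.
  have [a [fa Ea]] := (nontriv_char f x).1 Nx.
  have [b [fb Eb]] := (nontriv_char f y).1 Ny.
  rewrite Ea Eb in xy *.
  case: (orbital_cmp xy) => h; [left|right]; split => //.
    by exists a; exact: orb_refl.
  by exists b; exact: orb_refl.
pose a n := rep (u n).
have Ha n : f (a n) <> a n /\ u n = orbital_of f (a n).
  by apply: Hrep; case: (Su n).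
have Hk n : key (u n) = key (u 0%N) by case: (Su n) => _ ->; case: (Su 0%N) => _ ->.
have Hdir n : (a n < f (a n)) = (a 0%N < f (a 0%N)).
  by have := Hk n; rewrite /key /a => -[].
have Hsup n : rsup (orbital_of f (a n)) <-> rsup (orbital_of f (a 0%N)).
  rewrite -(Ha n).2 -(Ha 0%N).2; apply: asbool_iff.
  by have := Hk n; rewrite /key => -[].
have Hinf n : rinf (orbital_of f (a n)) <-> rinf (orbital_of f (a 0%N)).
  rewrite -(Ha n).2 -(Ha 0%N).2; apply: asbool_iff.
  by have := Hk n; rewrite /key => -[].
have Hmv n : f (a n) <> a n by case: (Ha n).
case: Hu => Hu.
  apply: (MC_main Hmv) => // n; rewrite -(Ha n).2 -(Ha n.+1).2; by case: (Hu n).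
apply: transfer_neg.
pose b n := - a n.
have Hmv' n : negf f (b n) <> b n.
  by move/negf_moved; rewrite /b opprK; apply: Hmv.
apply: (@MC_main (negf f) b Hmv').
- move=> n x y; rewrite !orbital_neg /b !opprK /= => hx hy.
  rewrite -ltrN2; case: (Hu n) => + _; apply; [rewrite (Ha n.+1).2 //|rewrite (Ha n).2 //].
- move=> n; rewrite /b !negfE !opprK !ltrN2.
  have E m : (f (a m) < a m) = ~~ (a m < f (a m)).
    have ne : (a m == f (a m)) = false by apply/eqP => E; apply: (Hmv m); rewrite -E.
    by rewrite ltNge le_eqVlt ne.
  by rewrite !E Hdir.
- move=> n; rewrite !orbital_neg /b !opprK !rsup_neg; exact: Hinf.
- move=> n; rewrite !orbital_neg /b !opprK !rinf_neg; exact: Hsup.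
Qed.

Theorem lemma2p2 (f : aut) :
  (exists g g1 g2 : aut,
      restriction g f /\ orbital_elt g1 g /\ is_prod g g1 g2 /\ conjugate g g2)
  <-> infinite_set (nontriv_orbitals f).
Proof. by split; [exact: dir1|exact: dir2]. Qed.
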